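(* Let $X=[0,1]$ with the usual metric, $U=\{0,1,2\}$, and let $F_0,F_1,F_2:[0,1]\to[0,1]$ be given by $F_0(x)=x$ for $0\le x<\frac38$, $F_0(x)=5(x-\frac12)+1$ for $\frac38\le x<\frac12$, $F_0(x)=1$ for $\frac12\le x<\frac58$, $F_0(x)=-5(x-\frac34)+\frac38$ for $\frac58\le x<\frac34$, $F_0(x)=\frac38$ for $\frac34\le x\le1$; $F_1(x)=1$ for $0\le x<\frac14$, $F_1(x)=-4(x-\frac14)+1$ for $\frac14\le x<\frac38$, $F_1(x)=\frac12$ for $\frac38\le x<\frac12$, $F_1(x)=4(x-\frac58)+1$ for $\frac12\le x<\frac58$, $F_1(x)=1$ for $\frac58\le x\le1$; and $F_2(x)=1$ for all $x\in[0,1]$. Consider the control system $x_{n+1}=F_{u_n}(x_n)$ and let $Q=[\frac14,\frac12]$. Then $Q$ is equi-invariant in the mean but not equi-invariant.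
   Context: For $\omega=(\omega_0,\omega_1,\dots)\in\mathscr U=U^{\mathbb N_0}$ and $x\in X$: $\phi(0,x,\omega)=x$, $\phi(k,x,\omega)=F_{\omega_{k-1}}\circ\cdots\circ F_{\omega_0}(x)$. $d(y,Q)=\inf_{q\in Q}|y-q|$, $B_\varepsilon(Q)=\{y:d(y,Q)<\varepsilon\}$, $B(x,\delta)$ open ball, $\mathbb N=\{1,2,\dots\}$. A point $x\in Q$ is an equi-invariant point of $Q$ if for every $\varepsilon>0$ there exist $\delta>0$ and $\omega\in\mathscr U$ such that $\phi(k,y,\omega)\in B_\varepsilon(Q)$ for all $k\in\mathbb N_0$ and all $y\in B(x,\delta)\cap Q$. It is an equi-invariant point in the mean of $Q$ if for every $\varepsilon>0$ there exist $\delta>0$ and $\omega\in\mathscr U$ such that $\frac1n\sum_{i=0}^{n-1}d(\phi(i,y,\omega),Q)<\varepsilon$ for all $n\in\mathbb N$ and all $y\in B(x,\delta)\cap Q$. $Q$ is equi-invariant (resp. equi-invariant in the mean) if all its points are. *)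

(* Defs.v *)
From Stdlib Require Import Reals Lra.
From Coquelicot Require Import Coquelicot.
Open Scope R_scope.

Fixpoint phi {U : Type} (F : U -> R -> R) (k : nat) (x : R) (w : nat -> U) : R :=
  match k with
  | O => x
  | S k' => F (w k') (phi F k' x w)
  end.

(* d(y,Q) = inf_{q in Q} |y - q|  (Q nonempty in all uses) *)
Definition dist_set (y : R) (Q : R -> Prop) : R :=
  real (Glb_Rbar (fun r => exists q, Q q /\ r = Rabs (y - q))).

Definition Beps (eps : R) (Q : R -> Prop) (y : R) : Prop := dist_set y Q < eps.

Definition equi_invariant_point {U : Type} (F : U -> R -> R) (Q : R -> Prop) (x : R) : Prop :=
  Q x /\
  forall eps, 0 < eps -> exists delta, 0 < delta /\ exists w : nat -> U,
    forall k y, Rabs (y - x) < delta -> Q y -> Beps eps Q (phi F k y w).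

Definition equi_invariant_mean_point {U : Type} (F : U -> R -> R) (Q : R -> Prop) (x : R) : Prop :=
  Q x /\
  forall eps, 0 < eps -> exists delta, 0 < delta /\ exists w : nat -> U,
    forall (n : nat) y, (1 <= n)%nat -> Rabs (y - x) < delta -> Q y ->
      / INR n * sum_f_R0 (fun i => dist_set (phi F i y w) Q) (pred n) < eps.

Definition equi_invariant {U : Type} (F : U -> R -> R) (Q : R -> Prop) : Prop :=
  forall x, Q x -> equi_invariant_point F Q x.

Definition equi_invariant_mean {U : Type} (F : U -> R -> R) (Q : R -> Prop) : Prop :=
  forall x, Q x -> equi_invariant_mean_point F Q x.

Inductive ctrl : Type := c0 | c1 | c2.

Definition F0 (x : R) : R :=
  if Rlt_dec x (3/8) then x
  else if Rlt_dec x (1/2) then 5 * (x - 1/2) + 1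
  else if Rlt_dec x (5/8) then 1
  else if Rlt_dec x (3/4) then -5 * (x - 3/4) + 3/8
  else 3/8.

Definition F1 (x : R) : R :=
  if Rlt_dec x (1/4) then 1
  else if Rlt_dec x (3/8) then -4 * (x - 1/4) + 1
  else if Rlt_dec x (1/2) then 1/2
  else if Rlt_dec x (5/8) then 4 * (x - 5/8) + 1
  else 1.

Definition F2 (x : R) : R := 1.

Definition Fex (u : ctrl) : R -> R :=
  match u with c0 => F0 | c1 => F1 | c2 => F2 end.

Definition Qex (y : R) : Prop := 1/4 <= y <= 1/2.

(* Main.v *)
Require Import Defs.
From Stdlib Require Import Reals Lra Lia Classical Wf_nat.
From Coquelicot Require Import Coquelicot.
Open Scope R_scope.

Ltac solveF := unfold F0, F1, F2; repeat destruct Rlt_dec; lra.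

Lemma dist_bounds z q : Qex q -> 0 <= dist_set z Qex <= Rabs (z - q).
Proof.
  intros Hq. unfold dist_set.
  set (E := fun r => exists q0, Qex q0 /\ r = Rabs (z - q0)).
  destruct (Glb_Rbar_correct E) as [Hlb Hglb].
  assert (H1 : Rbar_le (Glb_Rbar E) (Finite (Rabs (z-q)))) by (apply Hlb; exists q; auto).
  assert (H2 : Rbar_le (Finite 0) (Glb_Rbar E)).
  { apply Hglb. intros r [q' [_ ->]]. simpl. apply Rabs_pos. }
  destruct (Glb_Rbar E); simpl in *; try contradiction; lra.
Qed.

Lemma dist_far z : 5/8 <= z -> 1/8 <= dist_set z Qex.
Proof.
  intros Hz. unfold dist_set.
  set (E := fun r => exists q0, Qex q0 /\ r = Rabs (z - q0)).
  destruct (Glb_Rbar_correct E) as [Hlb Hglb].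
  assert (H1 : Rbar_le (Glb_Rbar E) (Finite (Rabs (z-1/2)))) by (apply Hlb; exists (1/2); split; [unfold Qex; lra|auto]).
  assert (H2 : Rbar_le (Finite (1/8)) (Glb_Rbar E)).
  { apply Hglb. intros r [q' [Hq' ->]]. simpl. unfold Qex in Hq'.
    rewrite Rabs_right; lra. }
  destruct (Glb_Rbar E); simpl in *; try contradiction; lra.
Qed.

Lemma phiS (w : nat -> ctrl) y k : phi Fex (S k) y w = Fex (w k) (phi Fex k y w).
Proof. reflexivity. Qed.

Lemma L1 (w : nat -> ctrl) (y : R) : forall N k,
  (1/8)*(1/4)^N <= phi Fex k y w - 1/2 -> exists k', 5/8 <= phi Fex k' y w.
Proof.
  induction N; intros k H.
  - simpl in H. exists k; lra.
  - destruct (Rle_lt_dec (5/8) (phi Fex k y w)) as [Hf|Hn]. exists k; auto.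
    assert (0 < (1/4)^N) by (apply pow_lt; lra).
    simpl pow in H.
    destruct (w k) eqn:E.
    + exists (S k). rewrite phiS, E. simpl Fex. solveF.
    + apply (IHN (S k)). rewrite phiS, E. simpl Fex. solveF.
    + exists (S k). rewrite phiS, E. simpl Fex. solveF.
Qed.

Lemma L2 (w : nat -> ctrl) (y : R) : (forall j, w j = c0) -> forall N k,
  (1/8)*(1/5)^N <= phi Fex k y w - 3/8 -> exists k', 5/8 <= phi Fex k' y w.
Proof.
  intros Hw. induction N; intros k H.
  - simpl in H. destruct (Rle_lt_dec (5/8) (phi Fex k y w)) as [Hf|Hn]. exists k; auto.
    exists (S k). rewrite phiS, Hw. simpl Fex. solveF.
  - destruct (Rle_lt_dec (1/2) (phi Fex k y w)) as [Hf|Hn].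
    + destruct (Rle_lt_dec (5/8) (phi Fex k y w)) as [Hf'|Hn']. exists k; auto.
      exists (S k). rewrite phiS, Hw. simpl Fex. solveF.
    + assert (0 < (1/5)^N) by (apply pow_lt; lra).
      simpl pow in H.
      apply (IHN (S k)). rewrite phiS, Hw. simpl Fex. solveF.
Qed.

Lemma least (P : nat -> Prop) : forall n, P n -> exists m, P m /\ forall j, (j < m)%nat -> ~ P j.
Proof.
  intro n. induction n as [n IH] using (well_founded_induction lt_wf). intros Hn.
  destruct (classic (exists j, (j < n)%nat /\ P j)) as [[j [Hj Pj]]|Hno].
  - exact (IH j Hj Pj).
  - exists n; split; auto. intros j Hj Pj; apply Hno; eauto.
Qed.

Lemma not_ei : ~ equi_invariant Fex Qex.
Proof.
  intro H. destruct (H (3/8)) as [_ Hp]. unfold Qex; lra.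
  destruct (Hp (1/8)) as [d [Hd [w Hw]]]; [lra|].
  assert (Hcon : forall y k, Rabs (y - 3/8) < d -> Qex y -> 5/8 <= phi Fex k y w -> False).
  { intros y k H1 H2 H3. specialize (Hw k y H1 H2). unfold Beps in Hw.
    pose proof (dist_far _ H3). lra. }
  destruct (classic (exists m, w m <> c0)) as [[m0 Hm0]|Hall].
  - destruct (least (fun m => w m <> c0) m0 Hm0) as [m [Hm Hlt]].
    destruct (pow_lt_1_zero (1/4)) with (y := Rmin d 1) as [N HN].
    { rewrite Rabs_right; lra. } { apply Rmin_pos; lra. }
    specialize (HN N (le_n N)). rewrite Rabs_right in HN by (left; apply pow_lt; lra).
    pose proof (Rmin_l d 1). pose proof (Rmin_r d 1).
    assert (0 < (1/4)^N) by (apply pow_lt; lra).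
    set (t := (1/32)*(1/4)^N).
    assert (Hy : forall j, (j <= m)%nat -> phi Fex j (3/8 - t) w = 3/8 - t).
    { induction j; intros Hj. reflexivity.
      rewrite phiS, IHj by lia.
      assert (Hwj : w j = c0) by (assert (Hn := Hlt j ltac:(lia)); destruct (w j); auto; exfalso; apply Hn; congruence).
      rewrite Hwj. simpl Fex. unfold t. solveF. }
    assert (Hr : Rabs (3/8 - t - 3/8) < d) by (unfold t; rewrite Rabs_left; lra).
    assert (HQ : Qex (3/8 - t)) by (unfold Qex, t; lra).
    destruct (w m) eqn:E; [congruence| |].
    + destruct (L1 w (3/8 - t) N (S m)) as [k' Hk'].
      { rewrite phiS, E, Hy by lia. simpl Fex. unfold t. solveF. }
      exact (Hcon _ _ Hr HQ Hk').
    + apply (Hcon _ (S m) Hr HQ). rewrite phiS, E. simpl Fex. solveF.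
  - assert (Hw0 : forall j, w j = c0).
    { intro j. destruct (w j) eqn:E; auto; exfalso; apply Hall; exists j; congruence. }
    destruct (pow_lt_1_zero (1/5)) with (y := Rmin d 1) as [N HN].
    { rewrite Rabs_right; lra. } { apply Rmin_pos; lra. }
    specialize (HN N (le_n N)). rewrite Rabs_right in HN by (left; apply pow_lt; lra).
    pose proof (Rmin_l d 1). pose proof (Rmin_r d 1).
    assert (0 < (1/5)^N) by (apply pow_lt; lra).
    set (t := (1/8)*(1/5)^N).
    assert (Hr : Rabs (3/8 + t - 3/8) < d) by (unfold t; rewrite Rabs_right; lra).
    assert (HQ : Qex (3/8 + t)) by (unfold Qex, t; lra).
    destruct (L2 w (3/8 + t) Hw0 N 0) as [k' Hk'].
    { simpl. unfold t. lra. }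
    exact (Hcon _ _ Hr HQ Hk').
Qed.

Lemma sum_le0 (d : nat -> R) m : (forall i, d i <= 0) -> sum_f_R0 d m <= 0.
Proof. intros H; induction m; simpl; [apply H|]. pose proof (H (S m)); lra. Qed.

Lemma fin_le (a s e : R) : 0 < a -> s <= 0 -> 0 < e -> a * s < e.
Proof. intros. assert (a * s <= a * 0) by (apply Rmult_le_compat_l; lra). lra. Qed.

Lemma fin_le2 (a s e b : R) : 0 < a -> s <= 1/2 -> a <= b -> b < e -> a * s < e.
Proof. intros. assert (a * s <= a * (1/2)) by (apply Rmult_le_compat_l; lra). lra. Qed.

Lemma mean_right x : 3/8 < x -> Qex x -> equi_invariant_mean_point Fex Qex x.
Proof.
  intros Hx HQx. split; auto. intros eps Heps.
  exists (x - 3/8). split; [lra|]. exists (fun _ => Defs.c1).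
  intros n y Hn Hy HQy. unfold Qex in *.
  assert (Hy' : 3/8 < y) by (apply Rabs_def2 in Hy; lra).
  assert (Hph : forall j, phi Fex j y (fun _ => Defs.c1) = y \/ phi Fex j y (fun _ => Defs.c1) = 1/2).
  { induction j. left; reflexivity. right. rewrite phiS. simpl Fex.
    destruct IHj as [-> | ->]; solveF. }
  assert (Hs : sum_f_R0 (fun i => dist_set (phi Fex i y (fun _ => Defs.c1)) Qex) (pred n) <= 0).
  { apply sum_le0. intro i. destruct (Hph i) as [-> | ->].
    - destruct (dist_bounds y y) as [_ H]; [unfold Qex; lra|]. rewrite Rminus_diag, Rabs_R0 in H; exact H.
    - destruct (dist_bounds (1/2) (1/2)) as [_ H]; [unfold Qex; lra|]. rewrite Rminus_diag, Rabs_R0 in H; exact H. }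
  assert (0 < / INR n) by (apply Rinv_0_lt_compat, lt_0_INR; lia).
  apply fin_le; auto.
Qed.

Section Left.
Variable L : nat.
Variable y : R.
Definition wL (j : nat) : ctrl := if Nat.eqb j L then c2 else c0.
Hypothesis Hy1 : 1/4 <= y.
Hypothesis Hy2 : y <= 1/2.
Hypothesis Hy3 : y < 3/8 + (1/8)*(1/5)^L.

Lemma wL_ne j : j <> L -> wL j = c0.
Proof. intros H; unfold wL. destruct (Nat.eqb_spec j L); congruence. Qed.

Lemma H5 j : (j <= L)%nat -> 3/8 <= y -> 5^j*(y-3/8) < 1/8.
Proof.
  intros Hj Hy.
  assert (A : 5^j*(y-3/8) <= 5^L*(y-3/8)) by (apply Rmult_le_compat_r; [lra|apply Rle_pow; lra||lia]).
  assert (P : 0 < 5^L) by (apply pow_lt; lra).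
  assert (B : 5^L*(y-3/8) < 5^L*((1/8)*(1/5)^L)) by (apply Rmult_lt_compat_l; lra).
  assert (C : 5^L*((1/8)*(1/5)^L) = 1/8).
  { replace (5^L*((1/8)*(1/5)^L)) with ((1/8)*(5*(1/5))^L) by (rewrite Rpow_mult_distr; ring).
    replace (5*(1/5)) with 1 by field. rewrite pow1; ring. }
  lra.
Qed.

Lemma traj1 j : (j <= L)%nat -> (y < 3/8 /\ phi Fex j y wL = y) \/
   (3/8 <= y /\ phi Fex j y wL = 3/8 + 5^j*(y-3/8)).
Proof.
  induction j; intros Hj.
  - destruct (Rlt_le_dec y (3/8)); [left|right]; simpl; split; auto; ring.
  - rewrite phiS, wL_ne by lia. simpl Fex.
    destruct IHj as [[Ha ->]|[Ha ->]]; [lia| |].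
    + left; split; auto; solveF.
    + right; split; auto. pose proof (H5 (S j) Hj Ha). pose proof (H5 j ltac:(lia) Ha).
      assert (0 <= 5^j*(y-3/8)) by (apply Rmult_le_pos; [left; apply pow_lt|]; lra).
      replace (5^(S j)*(y-3/8)) with (5*(5^j*(y-3/8))) in * by (simpl; ring).
      solveF.
Qed.

Lemma trajQ j : (j <= L)%nat -> Qex (phi Fex j y wL).
Proof.
  intros Hj. unfold Qex. destruct (traj1 j Hj) as [[Ha ->]|[Ha ->]]; [lra|].
  pose proof (H5 j Hj Ha).
  assert (0 <= 5^j*(y-3/8)) by (apply Rmult_le_pos; [left; apply pow_lt|]; lra). lra.
Qed.

Lemma trajL : phi Fex (S L) y wL = 1.
Proof. rewrite phiS. unfold wL. rewrite Nat.eqb_refl. reflexivity. Qed.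

Lemma trajR i : phi Fex (S (S L) + i) y wL = 3/8.
Proof.
  induction i.
  - rewrite Nat.add_0_r, phiS, trajL, wL_ne by lia. simpl Fex. solveF.
  - replace (S (S L) + S i)%nat with (S (S (S L) + i)) by lia.
    rewrite phiS, IHi, wL_ne by lia. simpl Fex. solveF.
Qed.

Lemma dbound i : dist_set (phi Fex i y wL) Qex <= if Nat.eqb i (S L) then 1/2 else 0.
Proof.
  destruct (Nat.eqb_spec i (S L)) as [->|Hne].
  - rewrite trajL. destruct (dist_bounds 1 (1/2)) as [_ H]; [unfold Qex; lra|].
    rewrite Rabs_right in H; lra.
  - assert (HQ : Qex (phi Fex i y wL)).
    { destruct (Compare_dec.le_lt_dec i L). apply trajQ; auto.
      replace i with (S (S L) + (i - S (S L)))%nat by lia. rewrite trajR. unfold Qex; lra. }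
    destruct (dist_bounds (phi Fex i y wL) _ HQ) as [_ H].
    rewrite Rminus_diag, Rabs_R0 in H; exact H.
Qed.

Lemma sbound m : sum_f_R0 (fun i => dist_set (phi Fex i y wL) Qex) m <= if Nat.leb m L then 0 else 1/2.
Proof.
  induction m.
  - simpl. pose proof (dbound 0). simpl in H. destruct (Nat.leb 0 L); lra.
  - change (sum_f_R0 (fun i => dist_set (phi Fex i y wL) Qex) (S m)) with
      (sum_f_R0 (fun i => dist_set (phi Fex i y wL) Qex) m + dist_set (phi Fex (S m) y wL) Qex).
    pose proof (dbound (S m)).
    destruct (Nat.leb_spec m L); destruct (Nat.leb_spec (S m) L);
    destruct (Nat.eqb_spec (S m) (S L)); try lia; lra.
Qed.
End Left.

Lemma mean_left x : x <= 3/8 -> Qex x -> equi_invariant_mean_point Fex Qex x.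
Proof.
  intros Hx HQx. split; auto. intros eps Heps.
  destruct (archimed_cor1 eps Heps) as [L [HL HL0]].
  exists ((1/8)*(1/5)^L). split. { assert (0 < (1/5)^L) by (apply pow_lt; lra). lra. }
  exists (wL L). intros n y Hn Hy HQy. unfold Qex in HQy.
  assert (Hy3 : y < 3/8 + (1/8)*(1/5)^L) by (apply Rabs_def2 in Hy; lra).
  pose proof (sbound L y (proj1 HQy) (proj2 HQy) Hy3 (pred n)) as Hs.
  assert (0 < / INR n) by (apply Rinv_0_lt_compat, lt_0_INR; lia).
  destruct (Nat.leb_spec (pred n) L).
  - apply fin_le; auto.
  - assert (/ INR n <= / INR L).
    { apply Rinv_le_contravar. apply lt_0_INR; lia. apply le_INR; lia. }
    eapply fin_le2; eauto.
Qed.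

Theorem mainTheorem14 :
  equi_invariant_mean Fex Qex /\ ~ equi_invariant Fex Qex.
Proof.
  split; [|exact not_ei].
  intros x HQ. destruct (Rle_lt_dec x (3/8)).
  - apply mean_left; auto.
  - apply mean_right; auto.
Qed.
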